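(* Let $n\geqslant 2$ and let $\alpha$ be a partial cofinite isometry of $\mathbb{N}^n$. Then for every $i\in\{1,\ldots,n\}$ there exist a unique $j(i)\in\{1,\ldots,n\}$ and an integer $q(i)$ such that $(\mathbf{m}_i)\alpha=(\mathbf{m+q(i)})_{j(i)}$ for every integer $m\geqslant 2$ with $\mathbf{m}_i\in\operatorname{dom}\alpha$. Moreover, the map $i\mapsto j(i)$ is a permutation of the set $\{1,\ldots,n\}$.
   Context: $\mathbb{N}=\{1,2,3,\ldots\}$ and $\mathbb{N}^n$ carries the Euclidean metric $d$. A partial isometry of $\mathbb{N}^n$ is an injective partial map $\alpha\colon\mathbb{N}^n\rightharpoonup\mathbb{N}^n$ with $d((\mathbf{x})\alpha,(\mathbf{y})\alpha)=d(\mathbf{x},\mathbf{y})$ for all $\mathbf{x},\mathbf{y}\in\operatorname{dom}\alpha$; it is cofinite if $\mathbb{N}^n\setminus\operatorname{dom}\alpha$ and $\mathbb{N}^n\setminus\operatorname{ran}\alpha$ are finite. Maps are written on the right. For a positive integer $k$ and $j\in\{1,\ldots,n\}$, $\mathbf{k}_j\in\mathbb{N}^n$ denotes the point whose $j$-th coordinate is $k$ and all other coordinates equal $1$. *)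

(* Defs.v *)
From HB Require Import structures.
From mathcomp Require Import all_boot all_order all_algebra all_field.
Set Implicit Arguments. Unset Strict Implicit. Unset Printing Implicit Defensive.
Import Order.TTheory GRing.Theory Num.Theory.

(* Points of Z^n (coordinates as nat); a point lies in N^n = {1,2,...}^n
   when all coordinates are >= 1.  Coordinates are indexed by 'I_n,
   i.e. coordinate j in {1..n} of the paper is the ordinal j-1. *)
Definition pt (n : nat) := {ffun 'I_n -> nat}.

Definition inN (n : nat) (x : pt n) : Prop := forall j : 'I_n, 0 < x j.

Definition edist (n : nat) (x y : pt n) : algC :=
  sqrtC ((\sum_(j < n) (absz (Posz (x j) - Posz (y j))%R ^ 2))%:R)%R.

(* A partial map N^n -> N^n is a function into option; only points of N^n
   in which it is defined (Some) belong to the domain. *)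
Definition dom (n : nat) (a : pt n -> option (pt n)) (x : pt n) : Prop :=
  inN x /\ a x <> None.

Definition ran (n : nat) (a : pt n -> option (pt n)) (y : pt n) : Prop :=
  exists x, dom a x /\ a x = Some y.

Definition partial_isometry (n : nat) (a : pt n -> option (pt n)) : Prop :=
  (forall x y, dom a x -> a x = Some y -> inN y) /\
  (forall x x' y, dom a x -> dom a x' -> a x = Some y -> a x' = Some y -> x = x') /\
  (forall x x' y y', dom a x -> dom a x' -> a x = Some y -> a x' = Some y' ->
     edist y y' = edist x x').

Definition finite_set (n : nat) (P : pt n -> Prop) : Prop :=
  exists s : seq (pt n), forall x, P x -> x \in s.

Definition cofinite_partial_isometry (n : nat) (a : pt n -> option (pt n)) : Prop :=
  partial_isometry a /\
  finite_set (fun x => inN x /\ ~ dom a x) /\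
  finite_set (fun y => inN y /\ ~ ran a y).

Definition kpt (n : nat) (k : nat) (j : 'I_n) : pt n :=
  [ffun t => if t == j then k else 1%N].

Definition shifts_axis (n : nat) (a : pt n -> option (pt n)) (i j : 'I_n) (q : int)
  : Prop :=
  forall m : nat, (2 <= m)%N -> dom a (kpt m i) ->
    exists k : nat, (Posz k = Posz m + q)%R /\ a (kpt m i) = Some (kpt k j).

(* Main.v *)
Require Import Defs.
From HB Require Import structures.
From mathcomp Require Import all_boot all_order all_algebra all_field.
From mathcomp Require Import zify ring lra.
Set Implicit Arguments. Unset Strict Implicit. Unset Printing Implicit Defensive.
Import Order.TTheory GRing.Theory Num.Theory.
Local Open Scope ring_scope.

Section H.
Variable n : nat.
Implicit Types x y p : pt n.

Definition Dz x y : int := \sum_(j < n) ((Posz (x j)) - Posz (y j)) ^+ 2.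
Definition ip x y p : int :=
  \sum_(j < n) ((Posz (x j)) - Posz (p j)) * ((Posz (y j)) - Posz (p j)).

Lemma Dz_nat x y :
  Posz (\sum_(j < n) (absz (Posz (x j) - Posz (y j)) ^ 2))%N = Dz x y.
Proof.
rewrite /Dz (big_morph Posz PoszD (erefl (Posz 0))).
apply: eq_bigr => j _.
rewrite PoszM !abszE -normrM ger0_norm; [by rewrite expr2| by rewrite -expr2 sqr_ge0].

Qed.

Lemma edist_Dz x y x' y' : edist x y = edist x' y' -> Dz x y = Dz x' y'.
Proof.
rewrite /edist => /(congr1 (fun z => z ^+ 2)); rewrite !sqrtCK => /eqP.
by rewrite eqr_nat -!Dz_nat => /eqP ->.
Qed.

Lemma polar x y p : 2 * ip x y p = Dz x p + Dz y p - Dz x y.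
Proof.
rewrite /ip /Dz mulr_sumr -big_split -sumrB /=.
apply: eq_bigr => j _; ring.
Qed.

Lemma unitv (u : 'I_n -> int) : \sum_j u j ^+ 2 = 1 ->
  exists t, u t ^+ 2 = 1 /\ forall j, j != t -> u j = 0.
Proof.
move=> H.
have [t Ht] : exists t, u t != 0.
  apply/existsP; apply: contraT; rewrite negb_exists => /forallP A.
  move: H; rewrite big1 // => j _; by move: (A j); rewrite negbK => /eqP ->; rewrite expr0n.
exists t.
move: H; rewrite (bigD1 t) //=.
have h1 : 0 <= \sum_(j | j != t) u j ^+ 2 by apply: sumr_ge0 => j _; exact: sqr_ge0.
have h2 : 1 <= u t ^+ 2.
  have : 0 < u t ^+ 2 by rewrite lt_def sqrf_eq0 Ht sqr_ge0.
  move=> h; lia.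
move: h1 h2; set A := u t ^+ 2; set S := \sum_(j | j != t) _ => h1 h2 H.
have e1 : u t ^+ 2 = 1 by lia.
split=> // j Hj.
have e2 : S = 0 by lia.
have := psumr_eq0P (fun j _ => sqr_ge0 (u j)) e2 Hj.
by move/eqP; rewrite sqrf_eq0 => /eqP.
Qed.


Lemma ge_in (s : seq (pt n)) x j : x \in s ->
  (x j <= \sum_(y <- s) \sum_(k < n) y k)%N.
Proof.
move=> xs; rewrite (big_rem x) //=.
apply: leq_trans (leq_addr _ _).
by rewrite (bigD1 j) //= leq_addr.
Qed.

Lemma other (n2 : (2 <= n)%N) (k : 'I_n) : exists j : 'I_n, j != k.
Proof.
have h0 : (0 < n)%N by lia.
have h1 : (1 < n)%N by lia.
have [E|E] := eqVneq (Ordinal h0) k.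
  by exists (Ordinal h1); rewrite -E.
by exists (Ordinal h0).
Qed.

End H.
From Stdlib Require Import Classical.

Theorem lemma2p6 (n : nat) (a : pt n -> option (pt n)) :
  (2 <= n)%N -> cofinite_partial_isometry a ->
  exists (j : 'I_n -> 'I_n) (q : 'I_n -> int),
    (forall i, shifts_axis a i (j i) (q i)) /\
    (forall i (j' : 'I_n) (q' : int), shifts_axis a i j' q' -> j' = j i) /\
    bijective j.
Proof.
move=> n2 [[Hin [Hinj Hiso]] [[s Hs] [s' Hs']]].
have n0 : (0 < n)%N by lia.
pose j0 : 'I_n := Ordinal n0.
pose B := (\sum_(y <- s) \sum_(k < n) y k)%N.
pose B' := (\sum_(y <- s') \sum_(k < n) y k)%N.
pose c := (B + B').+1.
have domc : forall x, inN x -> forall j, (c <= x j)%N -> dom a x.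
  move=> x Hx j Hj; split=> //; case E: (a x) => [y|] //= _.
  have : x \in s by apply: Hs; split=> // -[_]; rewrite E.
  move/(ge_in j); rewrite -/B => h; lia.
have ranc : forall y, inN y -> forall j, (c <= y j)%N -> ran a y.
  move=> y Hy j Hj; apply: NNPP => Hr.
  have : y \in s' by apply: Hs'.
  move/(ge_in j); rewrite -/B' => h; lia.
pose g := fun x => odflt x (a x).
have gE : forall x, dom a x -> a x = Some (g x).
  by move=> x [_]; rewrite /g; case: (a x).
have gin : forall x, dom a x -> inN (g x) by move=> x H; exact: Hin x (g x) H (gE x H).
have Dp : forall x y, dom a x -> dom a y -> Dz (g x) (g y) = Dz x y.
  by move=> x y Hx Hy; apply: edist_Dz; apply: Hiso => //; apply: gE.
have ipp : forall x y p, dom a x -> dom a y -> dom a p ->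
    ip (g x) (g y) (g p) = ip x y p.
  move=> x y p Hx Hy Hp; apply: (@mulfI _ 2) => //; by rewrite !polar !Dp.
pose P : pt n := [ffun _ => c].
pose Pk := fun k : 'I_n => [ffun j => (c + (j == k))%N] : pt n.
have domP : dom a P by apply: (domc _ _ j0); [move=> j; rewrite ffunE | rewrite ffunE].
have domPk : forall k, dom a (Pk k).
  move=> k; apply: (domc _ _ k); [move=> j; rewrite ffunE; lia | rewrite ffunE; lia].
have e : forall b : bool, Posz (c + b) - Posz c = Posz b.
  by move=> b; rewrite PoszD addrAC subrr add0r.
pose u := fun k j => Posz (g (Pk k) j) - Posz (g P j).
have uunit : forall k, \sum_j u k j ^+ 2 = 1.
  move=> k; rewrite [LHS](Dp (Pk k) P) //.
  rewrite /Dz (bigD1 k) //= big1 => [|j Hj]; rewrite !ffunE ?e ?eqxx //.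
  by rewrite (negbTE Hj).
have [sg Hsg] := fin_all_exists (fun k => unitv (uunit k)).
have ipPk : forall x k, ip x (Pk k) P = Posz (x k) - Posz c.
  move=> x k; rewrite /ip (bigD1 k) //= big1 => [|j Hj]; rewrite !ffunE ?e ?eqxx.
    by rewrite mulr1 addr0.
  by rewrite (negbTE Hj) mulr0.
have ipimg : forall x k, ip (g x) (g (Pk k)) (g P) =
    (Posz (g x (sg k)) - Posz (g P (sg k))) * u k (sg k).
  move=> x k; rewrite /ip (bigD1 (sg k)) //= big1 ?addr0 // => j Hj.
  have -> : Posz (g (Pk k) j) - Posz (g P j) = u k j by [].
  by rewrite ((Hsg k).2 j Hj) mulr0.
have key : forall x k, dom a x ->
    (Posz (g x (sg k)) - Posz (g P (sg k))) * u k (sg k) = Posz (x k) - Posz c.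
  by move=> x k Hx; rewrite -ipimg ipp // ipPk.
have inj : injective sg.
  move=> k l E; apply/eqP; apply: contraT => Hkl.
  have H0 : ip (g (Pk k)) (g (Pk l)) (g P) = 0.
    rewrite ipp // /ip big1 // => j _; rewrite !ffunE !e.
    have [->|jk] := eqVneq j k; first by rewrite (negbTE Hkl) mulr0.
    by rewrite ?(negbTE jk) mul0r.
  move: H0; rewrite /ip (bigD1 (sg k)) //= big1 ?addr0 => [|j Hj].
    have -> : Posz (g (Pk k) (sg k)) - Posz (g P (sg k)) = u k (sg k) by [].
    have -> : Posz (g (Pk l) (sg k)) - Posz (g P (sg k)) = u l (sg l) by rewrite E.
    move=> /(congr1 (fun z => z ^+ 2)); rewrite exprMn (Hsg k).1 (Hsg l).1.
    by rewrite expr0n mulr1.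
  have -> : Posz (g (Pk k) j) - Posz (g P j) = u k j by [].
  by rewrite ((Hsg k).2 j Hj) mul0r.
have sign : forall k, u k (sg k) = 1.
  move=> k; pose p := g P (sg k).
  pose x : pt n := [ffun j => if j == k then (c + p + 1)%N else c].
  have dx : dom a x.
    apply: (domc _ _ k); [move=> j; rewrite ffunE; case: ifP => _; lia|
      rewrite ffunE eqxx; lia].
  have := key x k dx; rewrite ffunE eqxx -/p.
  have := (Hsg k).1; move/eqP; rewrite sqrf_eq1 => /orP[/eqP //|/eqP ->].
  rewrite mulrN1 => h; exfalso.
  move: h; set z := g x (sg k); lia.
have shift : forall x k, dom a x ->
    Posz (g x (sg k)) - Posz (g P (sg k)) = Posz (x k) - Posz c.
  by move=> x k Hx; rewrite -(key x k Hx) sign mulr1.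
have pc : forall k, g P (sg k) = c.
  move=> k; apply/eqP; rewrite eqn_leq; apply/andP; split.
    have [j Hj] := other n2 (sg k).
    pose y : pt n := [ffun t => if t == sg k then 1%N else c].
    have ry : ran a y.
      apply: (ranc y _ j); first by move=> t; rewrite ffunE; case: ifP.
      by rewrite ffunE (negbTE Hj).
    have [x [dx ax]] := ry.
    have gy : g x = y by move: (gE x dx); rewrite ax => -[].
    have := shift x k dx; rewrite gy ffunE eqxx.
    have := (dx.1 k); set p := g P (sg k); set xk := x k; lia.
  have [j Hj] := other n2 k.
  pose x : pt n := [ffun t => if t == k then 1%N else c].
  have dx : dom a x.
    apply: (domc _ _ j); [move=> t; rewrite ffunE; case: ifP|
      rewrite ffunE (negbTE Hj)] => //.
  have := shift x k dx; rewrite ffunE eqxx.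
  have := gin x dx (sg k); set p := g P (sg k); set z := g x (sg k); lia.
have final : forall x k, dom a x -> g x (sg k) = x k.
  move=> x k Hx; have := shift x k Hx; rewrite pc => h; lia.
have bij := injF_bij inj.
have [sgi K1 K2] := bij.
have img : forall i m, dom a (kpt m i) -> a (kpt m i) = Some (kpt m (sg i)).
  move=> i m Hd; rewrite (gE _ Hd); congr Some; apply/ffunP => t.
  rewrite -(K2 t) final // !ffunE (inj_eq inj) //.
exists sg, (fun _ => 0); split; last split => //.
  move=> i m m2 Hd; exists m; split; first by rewrite addr0.
  exact: img.
move=> i j' q' Hs1.
pose m := (c + 2 + absz q')%N.
have dm : dom a (kpt m i).
  apply: (domc _ _ i); [move=> t; rewrite ffunE; case: ifP => _; lia|
    rewrite ffunE eqxx; lia].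
have [|k [hk ak]] := Hs1 m _ dm; first by lia.
move: ak; rewrite img // => -[] /(congr1 (fun f : pt n => f j')).
rewrite !ffunE eqxx; case: eqP => // _ hk1.
move: hk; rewrite -hk1 => hk; exfalso.
have : (0 <= Posz (absz q') + q') by lia.
move: hk; rewrite /m; lia.
Qed.
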